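(* Let $\mathcal{D}$ be any distribution over pairs $(x,y)$ with $x\in\mathcal{X}\subseteq\mathbb{R}^d$ and $y\in\{1,\dots,k\}$, and let $h:\mathcal{X}\to\{-1,1\}$ be any hypothesis. Let $\pi_i=P(y=i)$ and $\beta=P(h(x)>0)$, and let \[ J(h)=2\sum_{i=1}^k \pi_i\,\bigl|P(h(x)>0)-P(h(x)>0\mid i)\bigr|. \] Then \[ \beta\in\Bigl[\tfrac12\bigl(1-\sqrt{1-J(h)}\bigr),\ \tfrac12\bigl(1+\sqrt{1-J(h)}\bigr)\Bigr]. \]
   Context: $P(h(x)>0\mid i)$ denotes the probability that $h(x)>0$ conditional on the label being $i$. It is known that $J(h)\in[0,1]$. *)

(* Defs.v *)
From HB Require Import structures.
From mathcomp Require Import all_boot all_order all_algebra.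
From mathcomp Require Import all_classical all_reals all_analysis.
Set Implicit Arguments. Unset Strict Implicit. Unset Printing Implicit Defensive.
Import Order.TTheory GRing.Theory Num.Theory.
Local Open Scope classical_set_scope.
Local Open Scope ring_scope.

Definition prb (R : realType) (dT : measure_display) (Omega : measurableType dT)
  (P : probability Omega R) (A : set Omega) : R := fine (P A).

(* Elementary conditional probability P(A | B) = P(A ∩ B) / P(B)
   (equals 0 when P(B) = 0, by MathComp's convention 0^-1 = 0). *)
Definition cprb (R : realType) (dT : measure_display) (Omega : measurableType dT)
  (P : probability Omega R) (A B : set Omega) : R :=
  prb P (A `&` B) / prb P B.

Definition Jh (R : realType) (dT : measure_display) (Omega : measurableType dT)
  (P : probability Omega R) (d k : nat) (x : Omega -> 'rV[R]_d) (y : Omega -> 'I_k)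
  (h : 'rV[R]_d -> R) : R :=
  let A := [set w | 0 < h (x w)] in
  2 * \sum_(i < k) prb P [set w | y w = i] *
        `| prb P A - cprb P A [set w | y w = i] |.

(* Main.v *)
Require Import Defs.
From HB Require Import structures.
From mathcomp Require Import all_boot all_order all_algebra.
From mathcomp Require Import all_classical all_reals all_analysis.
From mathcomp Require Import ring lra.
Import Order.TTheory GRing.Theory Num.Theory.
Local Open Scope classical_set_scope.
Local Open Scope ring_scope.

Lemma key (R : realFieldType) k (p a : 'I_k -> R) beta :
  (forall i, 0 <= a i <= p i) -> \sum_i a i = beta -> \sum_i p i = 1 ->
  \sum_i `|p i * beta - a i| <= 2 * beta * (1 - beta).
Proof.
move=> hap ha hp.
have b0 : 0 <= beta by rewrite -ha; apply: sumr_ge0 => i _; case/andP: (hap i).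
have b1 : beta <= 1 by rewrite -ha -hp; apply: ler_sum => i _; case/andP: (hap i).
apply: (le_trans (y := \sum_i ((p i - a i) * beta + a i * (1 - beta)))).
  apply: ler_sum => i _.
  have -> : p i * beta - a i = (p i - a i) * beta - a i * (1 - beta) by ring.
  apply: (le_trans (ler_normB _ _)).
  case/andP: (hap i) => h1 h2.
  rewrite !ger0_norm //; [apply: mulr_ge0 | apply: mulr_ge0]; lra.
rewrite big_split /= -!mulr_suml sumrB ha hp; lra.
Qed.

Lemma sqrt_part (R : rcfType) (beta J : R) : J <= 4 * beta * (1 - beta) ->
  (1 - Num.sqrt (1 - J)) / 2 <= beta <= (1 + Num.sqrt (1 - J)) / 2.
Proof.
move=> hJ.
have : `|1 - 2 * beta| <= Num.sqrt (1 - J).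
  have hs := sqr_ge0 (1 - 2 * beta).
  rewrite -sqrtr_sqr ler_sqrt; last by nra.
  nra.
rewrite ler_norml => /andP[h1 h2]; apply/andP; split; lra.
Qed.


Lemma prb_sum (R : realType) (dT : measure_display) (Omega : measurableType dT)
  (P : probability Omega R) (k : nat) (y : Omega -> 'I_k) (E : set Omega)
  (mE : measurable E) (my : forall i : 'I_k, measurable [set w | y w = i]) :
  prb P E = \sum_i prb P (E `&` [set w | y w = i]).
Proof.
have mF : forall i : 'I_k, measurable (E `&` [set w | y w = i]).
  by move=> i; apply: measurableI.
have hU : \big[setU/set0]_(i < k) (E `&` [set w | y w = i]) = E.
  apply/seteqP; split => w.
    elim/big_ind: _ => //; first by move=> S T hS hT [/hS|/hT].
    by move=> i _ [].
  move=> Ew; rewrite (bigD1 (y w)) //=; by left.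
have HS : P E = \sum_i P (E `&` [set w | y w = i]).
  rewrite -{1}hU measure_semi_additive_ord //; last by rewrite hU.
  move=> i j _ _ [w [[_ hi] [_ hj]]]; by rewrite -hi -hj.
rewrite /prb HS.
under eq_bigr => i _ do rewrite -(fineK (fin_num_measure P _ (mF i))).
by rewrite sumEFin.
Qed.

Theorem lemma2 (R : realType) (dT : measure_display) (Omega : measurableType dT)
  (P : probability Omega R) (d k : nat) (X : set 'rV[R]_d)
  (x : Omega -> 'rV[R]_d) (y : Omega -> 'I_k) (h : 'rV[R]_d -> R)
  (hxX : forall w, X (x w))
  (hpm1 : forall v, X v -> h v = 1 \/ h v = -1)
  (mA : measurable [set w | 0 < h (x w)])
  (my : forall i : 'I_k, measurable [set w | y w = i]) :
  let beta := prb P [set w | 0 < h (x w)] in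
  let J := Jh P x y h in
  (1 - Num.sqrt (1 - J)) / 2 <= beta <= (1 + Num.sqrt (1 - J)) / 2.
Proof.
cbv zeta.
set A := [set w | 0 < h (x w)].
set beta := prb P A. set J := Jh P x y h.
apply: sqrt_part.
pose p i := prb P [set w | y w = i].
pose a i := prb P (A `&` [set w | y w = i]).
have hap : forall i, 0 <= a i <= p i.
  move=> i; apply/andP; split.
    by apply: fine_ge0; apply: measure_ge0.
  apply: fine_le; try apply: fin_num_measure => //; try exact: measurableI.
  apply: le_measure; rewrite ?inE //; first exact: measurableI.

have ha : \sum_i a i = beta by rewrite /beta -prb_sum.
have hp : \sum_i p i = 1.
  rewrite /p.
  under eq_bigr => i _ do rewrite -(setTI [set w | y w = i]).
  by rewrite -prb_sum // /prb probability_setT.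
have := @key _ _ p a beta hap ha hp.
have -> : J = 2 * \sum_i `|p i * beta - a i|.
  rewrite /J /Jh; congr (_ * _); apply: eq_bigr => i _.
  rewrite /cprb -/(a i) -/(p i) -/beta.
  have [p0|pn0] := eqVneq (p i) 0.
    have -> : a i = 0 by case/andP: (hap i); rewrite p0 => ? ?; lra.
    by rewrite p0 !mul0r subr0 normr0.
  have pp : 0 <= p i by case/andP: (hap i) => ? ?; lra.
  rewrite -{1}(ger0_norm pp) -normrM.
  by rewrite mulrBr mulrCA divff // mulr1.
move=> hk; lra.
Qed.
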